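(* Let $q$ be a power of an odd prime, write $q-1=2^s r$ with $r$ odd, let $c\in\mathbb{F}_q^*$, and $f(X)=c(X^{q+1}-X^2)$ on $\mathbb{F}_{q^2}$. Then for every divisor $d$ of $r$ there are $\frac{\varphi(d)(q-1)}{2\,\mathrm{ord}_{3d}(4)}$ cycles of length $2\,\mathrm{ord}_{3d}(4)$ in the functional graph of $f$, and these are the only cycles of length greater than $1$.
   Context: The functional graph of $f$ is the directed graph on $\mathbb{F}_{q^2}$ with edges $x\to f(x)$. $\varphi$ is Euler's totient function and $\mathrm{ord}_m(n)$ is the multiplicative order of $n$ modulo $m$. *)

(* Defs.v *)
From mathcomp Require Import all_boot all_order all_algebra all_field.
Set Implicit Arguments. Unset Strict Implicit. Unset Printing Implicit Defensive.

(* Multiplicative order of n modulo m: the least k >= 1 with n^k = 1 (mod m).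
   For coprime n, m with m >= 1 such k exists and is <= m, so searching in
   1..m finds it. *)
Definition ordn (m n : nat) : nat :=
  (find (fun k => n ^ k.+1 %% m == 1 %% m) (iota 0 m)).+1.

Section FunGraph.
Variable T : finType.
Variable f : T -> T.

Definition periodic_of (L : nat) (x : T) : bool :=
  [&& 0 < L, iter L f x == x & [forall m : 'I_L, (0 < m) ==> (iter m f x != x)]].

Definition cycles_of_length (L : nat) : {set {set T}} :=
  [set [set iter i f x | i : 'I_L] | x in [pred x | periodic_of L x]].
End FunGraph.

(* Main.v *)
Require Import Defs.
From mathcomp Require Import all_boot all_order all_algebra all_field.
From mathcomp Require Import all_fingroup all_solvable zify ring.


Section Gen.
Variables (T : finType) (f : T -> T) (L : nat).
Local Notation per := (periodic_of f L).
Definition cyc x : {set T} := [set iter i f x | i : 'I_L].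
Lemma perE x : per x = [&& 0 < L, iter L f x == x & [forall m : 'I_L, (0 < m) ==> (iter m f x != x)]].
Proof. by []. Qed.

Lemma iter_mulL x k : iter L f x = x -> iter (k * L) f x = x.
Proof. by move=> H; elim: k => // k IH; rewrite mulSn iterD IH H. Qed.

Lemma per_mod x n : per x -> iter n f x = iter (n %% L) f x.
Proof.
rewrite perE => /and3P[_ /eqP H _]; rewrite {1}(divn_eq n L) iterD.
by rewrite -iterD addnC iterD iter_mulL.
Qed.

Lemma per_inj x : per x -> injective (fun i : 'I_L => iter i f x).
Proof.
move=> Hp; have /and3P[L0 /eqP HL /forallP Hm] : [&& 0 < L, iter L f x == x & [forall m : 'I_L, (0 < m) ==> (iter m f x != x)]] := Hp.
have key : forall i j : 'I_L, i < j -> iter i f x = iter j f x -> False.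
  move=> i j lij E.
  have ltj := ltn_ord j.
  have E2 : iter (L - j + i) f x = x.
    by rewrite iterD E -iterD subnK ?HL // ltnW.
  have lt : L - j + i < L by lia.
  have := Hm (Ordinal lt).
  rewrite /= E2 eqxx implybF => /negP; apply; lia.
move=> i j /= E; apply/val_inj/eqP; case: (ltngtP i j) => // lij; exfalso.
  exact: key lij E.
exact: key lij (esym E).
Qed.

Lemma card_cyc x : per x -> #|cyc x| = L.
Proof. by move=> Hp; rewrite card_imset ?card_ord //; apply: per_inj. Qed.

Lemma per_iter x i : per x -> per (iter i f x).
Proof.
move=> Hp; have /and3P[L0 /eqP HL /forallP Hm] : [&& 0 < L, iter L f x == x & [forall m : 'I_L, (0 < m) ==> (iter m f x != x)]] := Hp.
rewrite perE; apply/and3P; split => //.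
  by rewrite -iterD addnC iterD HL.
apply/forallP => m; apply/implyP => m0; apply/negP => /eqP E.
have := Hm m; rewrite m0 /= => /negP; apply.
rewrite (per_mod _ i Hp) in E.
have im : i %% L < L by apply: ltn_pmod.
have E1 : iter (L - i %% L) f (iter m f (iter (i %% L) f x)) = iter (L - i %% L) f (iter (i %% L) f x) by rewrite E.
rewrite -!iterD in E1.
have e1 : L - i %% L + m + i %% L = m + L by lia.
have e2 : L - i %% L + i %% L = L by lia.
by rewrite e1 e2 iterD HL in E1; apply/eqP.
Qed.

Lemma cyc_iter x i : per x -> cyc (iter i f x) = cyc x.
Proof.
move=> Hp; have L0 : 0 < L by move: Hp; rewrite perE => /and3P[].
apply/eqP; rewrite eqEcard card_cyc // card_cyc ?per_iter // leqnn andbT.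
apply/subsetP => y /imsetP [j _ ->]; apply/imsetP.
exists (Ordinal (ltn_pmod (j + i) L0)) => //=.
by rewrite -per_mod // iterD.
Qed.

Lemma mem_cyc x : 0 < L -> x \in cyc x.
Proof. by move=> L0; apply/imsetP; exists (Ordinal L0). Qed.

Lemma count_per (A : {set T}) : (forall x, x \in A -> f x \in A) ->
  #|[set x in A | per x]| = #|cyc @: [set x in A | per x]| * L.
Proof.
move=> Acl; set S := [set x in A | per x].
have iterA : forall n x, x \in A -> iter n f x \in A.
  by move=> n x xA; elim: n => //= n IH; apply: Acl.
rewrite -sum1_card (partition_big_imset cyc) /= -sum_nat_const.
apply: eq_bigr => C /imsetP [x0 Sx0 ->].
have /setIdP[Ax0 Px0] := Sx0.
rewrite sum1_card -(card_cyc _ Px0); apply: eq_card => y.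
rewrite unfold_in /= !inE; apply/andP/idP.
  case=> /andP [Ay Py] /eqP <-; apply: mem_cyc; by move: Py; rewrite perE => /and3P[].
move=> /imsetP [i _ ->]; split; last by rewrite cyc_iter.
by rewrite iterA // per_iter.
Qed.
End Gen.


Fixpoint Mq m := if m is m'.+1 then (4 * Mq m').+1 else 0.

Lemma Mq_spec m : 3 * Mq m + 1 = 4 ^ m.
Proof. elim: m => // m IH; rewrite expnS /= -IH; lia. Qed.

Lemma Mq_odd m : 0 < m -> odd (Mq m).
Proof. case: m => // m _ /=; by rewrite oddM. Qed.

Lemma good_mod d m : 0 < d -> (d %| Mq m) = (4 ^ m %% (3*d) == 1 %% (3*d)).
Proof.
move=> d0; rewrite -Mq_spec eqn_mod_dvd; last by lia.
by rewrite addnK dvdn_pmul2l.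
Qed.

Lemma totient_le n : totient n <= n.
Proof.
rewrite totient_count_coprime.
apply: (@leq_trans (\sum_(0 <= i < n) 1)).
  by apply: leq_sum => i _; apply: leq_b1.
by rewrite sum_nat_const_nat muln1 subn0.
Qed.

Lemma ordn_spec d : 0 < d -> odd d ->
  [/\ 0 < ordn (3*d) 4, d %| Mq (ordn (3*d) 4) &
      forall m, 0 < m < ordn (3*d) 4 -> ~~ (d %| Mq m)].
Proof.
move=> d0 dodd.
set P := fun k => 4 ^ k.+1 %% (3 * d) == 1 %% (3 * d).
have cop : coprime 4 (3 * d).
  rewrite coprimeMr; apply/andP; split => //.
  by rewrite (_ : 4 = 2 ^ 2) // coprimeXl // coprime2n.
have t0 : 0 < totient (3 * d) by rewrite totient_gt0 muln_gt0.
have hasP : has P (iota 0 (3 * d)).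
  apply/hasP; exists (totient (3 * d)).-1.
    rewrite mem_iota add0n /=; have := totient_le (3 * d); lia.
  rewrite /P prednK //; apply/eqP; exact: Euler_exp_totient.
have fl : find P (iota 0 (3*d)) < 3*d by rewrite -[X in _ < X](size_iota 0 (3*d)) -has_find.
have nf := nth_find 0 hasP.
rewrite nth_iota ?add0n in nf; last by [].
rewrite /ordn -/P; split => //.
  by rewrite good_mod.
move=> m /andP [m0 mlt]; rewrite good_mod //.
have := @before_find _ 0 P (iota 0 (3 * d)) m.-1.
rewrite nth_iota ?add0n; last lia.
rewrite /P prednK // => H; apply/negP => H2.
have E : m <= find P (iota 0 (3*d)) by lia.
by move: (H E); rewrite H2.
Qed.

Import GRing.Theory.
Local Open Scope ring_scope.


Lemma card_prim (F : finFieldType) d : (d %| #|F|.-1)%N ->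
  #|[set w : F | d.-primitive_root w]| = totient d.
Proof.
move=> dv.
set n := #|F|.-1.
have F1 := finNzRing_gt1 F.
have n0 : (0 < n)%N by rewrite /n; case: #|F| F1 => [|[|m]].
have d0 : (0 < d)%N by apply: dvdn_gt0 n0 dv.
have /hasP [zeta _ pz] : has n.-primitive_root (enum [set x : F | x != 0]).
  apply: has_prim_root => //.
  - apply/allP => x; rewrite mem_enum inE => x0; rewrite unity_rootE.
    apply/eqP; apply: (mulIf x0); rewrite mul1r -exprSr /n prednK; last lia.
    exact: expf_card.
  - exact: enum_uniq.
  - by rewrite -cardE cardsE cardC1.
set om := zeta ^+ (n %/ d).
have pom : d.-primitive_root om by apply: dvdn_prim_root.
have E : [set w : F | d.-primitive_root w] = [set om ^+ (val i) | i in [set i : 'I_d | coprime i d]].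
  apply/setP => w; rewrite inE; apply/idP/imsetP => [pw | [i]].
    have [i Ei] := prim_rootP pom (prim_expr_order pw).
    exists i => //; rewrite inE -(prim_root_exp_coprime _ pom) -Ei //.
  by rewrite inE => ci ->; rewrite prim_root_exp_coprime.
rewrite E card_in_imset; last first.
  move=> i j _ _ /eqP; rewrite (eq_prim_root_expr pom) !modn_small; last 2 first.
  - exact: ltn_ord.
  - exact: ltn_ord.
  by move/eqP/val_inj.
rewrite totient_count_coprime big_mkord -sum1_card big_mkcond /=.
apply: eq_bigr => i _; rewrite inE coprime_sym; by case: coprime.
Qed.


Section Fld.
Variables (F : finFieldType) (q : nat) (c : F).
Hypothesis Hq1 : (1 < q)%N.
Hypothesis HqD : forall x y : F, (x + y) ^+ q = x ^+ q + y ^+ q.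
Hypothesis Hqq : forall x : F, x ^+ q ^+ q = x.
Hypothesis Hc : c ^+ q = c.
Hypothesis Hc0 : c != 0.
Hypothesis H2 : (2 : F) != 0.

Definition f (x : F) := c * (x ^+ q.+1 - x ^+ 2).
Definition u (x : F) := x ^+ q - x.
Definition v (x : F) := x ^+ q + x.
Definition z (x : F) := - c ^+ 3 * v x * u x ^+ 2.

Lemma qN (x : F) : (- x) ^+ q = - x ^+ q.
Proof.
have := HqD (- x) x; rewrite addNr expr0n /= (_ : (q == 0%N) = false); last by case: q Hq1.
by move/eqP; rewrite eq_sym addr_eq0 => /eqP.
Qed.

Lemma qB (x y : F) : (x - y) ^+ q = x ^+ q - y ^+ q.
Proof. by rewrite HqD qN. Qed.

Lemma q2 : (2 : F) ^+ q = 2.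
Proof. by rewrite HqD expr1n. Qed.

Lemma fE (x : F) : f x = c * x * u x.
Proof. rewrite /f /u exprS; ring. Qed.

Lemma uq (x : F) : u x ^+ q = - u x.
Proof. by rewrite /u qB Hqq opprB. Qed.

Lemma vq (x : F) : v x ^+ q = v x.
Proof. by rewrite /v HqD Hqq addrC. Qed.

Lemma zq (x : F) : z x ^+ q = z x.
Proof.
rewrite /z !exprMn qN exprAC Hc vq uq; ring.
Qed.

Lemma fq (x : F) : f x ^+ q = - c * x ^+ q * u x.
Proof. rewrite fE !exprMn Hc uq; ring. Qed.

Lemma uf (x : F) : u (f x) = - c * u x * v x.
Proof. rewrite {1}/u fq fE /v; ring. Qed.

Lemma vf (x : F) : v (f x) = - c * u x ^+ 2.
Proof. rewrite {1}/v fq fE /u; ring. Qed.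

Lemma zf (x : F) : z (f x) = z x ^+ 2.
Proof. rewrite {1}/z uf vf /z; ring. Qed.

Lemma ff (x : F) : f (f x) = z x * x.
Proof. rewrite {1}fE uf fE /z /u /v; ring. Qed.


Lemma iter_even m (x : F) : iter (2 * m) f x = z x ^+ Mq m * x.
Proof.
elim: m x => [|m IH] x; first by rewrite /= expr0 mul1r.
rewrite mulnS addnC iterD /= IH !zf ff -!exprM mulrA -exprSr; congr (_ ^+ _ * _).
lia.
Qed.

Lemma iter_odd m (x : F) : iter (2 * m).+1 f x = z x ^+ (2 * Mq m) * f x.
Proof. by rewrite iterSr iter_even zf exprM. Qed.

Lemma f0 : f 0 = 0.
Proof. by rewrite fE mulr0 mul0r. Qed.

Lemma iter0 n : iter n f 0 = 0.
Proof. by elim: n => //= n ->; rewrite f0. Qed.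

Lemma per_zero (x : F) L : (1 < L)%N -> z x = 0 -> ~~ periodic_of f L x.
Proof.
move=> L1 zx; rewrite perE; apply/negP => /and3P [_ /eqP HL /forallP Hm].
have x0 : x = 0.
  by rewrite -HL -(subnK L1) addn2 !iterSr ff zx mul0r iter0.
have := Hm (Ordinal L1); rewrite /= x0 f0 eqxx.
by [].
Qed.

Lemma z0x (x : F) : z x != 0 -> x != 0.
Proof.
have q0 : (0:F) ^+ q = 0 by rewrite expr0n; case: (q) Hq1.
move=> H; apply/eqP => x0; move: H; by rewrite x0 /z /u /v q0 subr0 addr0 mulr0 mul0r eqxx.
Qed.

Lemma iter_odd_neq m (x : F) : z x != 0 -> iter (2 * m).+1 f x != x.
Proof.
move=> zx0; have x0 := z0x _ zx0.
rewrite iter_odd fE; apply/eqP => E.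
set w := z x ^+ (2 * Mq m) in E.
have wq : w ^+ q = w by rewrite /w exprAC zq.
have E1 : w * c * u x = 1.
  apply: (mulIf x0); rewrite mul1r -[RHS]E; ring.
have E2 : (w * c * u x) ^+ q = 1 by rewrite E1 expr1n.
rewrite !exprMn wq Hc uq in E2.
have : (2 : F) == 0.
  apply/eqP; rewrite -[2]/(1 + 1) -{1}E1 -E2; ring.
by rewrite (negbTE H2).
Qed.

Lemma iter_char d (x : F) n : d.-primitive_root (z x) ->
  (iter n f x == x) = (~~ odd n) && (d %| Mq n./2)%N.
Proof.
move=> pr; have zx0 : z x != 0.
  by rewrite (prim_root_eq0 pr) -lt0n (prim_order_gt0 pr).
have x0 := z0x _ zx0.
rewrite -{1}(odd_double_half n); case: (odd n) => /=.
  by rewrite add0n -mul2n; apply/negbTE; exact: (iter_odd_neq n./2 _ zx0).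
rewrite add0n -mul2n iter_even (prim_order_dvd pr).
apply/eqP/eqP => [E | ->]; last by rewrite mul1r.
by apply: (mulIf x0); rewrite mul1r.
Qed.

Lemma per_prim d (x : F) L : (1 < L)%N -> d.-primitive_root (z x) -> odd d ->
  periodic_of f L x = (L == 2 * ordn (3 * d) 4)%N.
Proof.
move=> L1 pr dodd; have d0 := prim_order_gt0 pr.
have [o0 dvo omin] := ordn_spec d d0 dodd.
set o := ordn (3 * d) 4 in o0 dvo omin *.
rewrite perE (iter_char _ _ _ pr).
apply/and3P/eqP => [[_ /andP[Lev dvL] /forallP Hm] | ->].
  have eL : L = (2 * L./2)%N by have h := odd_double_half L; rewrite (negbTE Lev) add0n -mul2n in h; rewrite h.
  have L20 : (0 < L./2)%N by lia.
  case: (ltngtP L./2 o) => h.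
  - by move: (omin L./2); rewrite L20 h dvL => /(_ isT).
  - have lt : (2 * o < L)%N by lia.
    have : (0 < 2*o)%N ==> (iter (2*o) f x != x) := Hm (Ordinal lt).
    by rewrite (iter_char _ _ _ pr) mul2n odd_double half_double dvo double_gt0 o0.
  - by rewrite eL h.
split; first by lia.
  by rewrite mul2n odd_double half_double.
apply/forallP => -[k lk] /=; apply/implyP => k0.
rewrite (iter_char _ _ _ pr); apply/negP => /andP [mev dvm].
have em : k = (2 * k./2)%N by have h := odd_double_half k; rewrite (negbTE mev) add0n -mul2n in h; rewrite h.
have := omin k./2; rewrite dvm; move/(_ _)/negP; apply => //.
lia.
Qed.

Lemma per_odd e (x : F) L : (1 < L)%N -> e.-primitive_root (z x) ->
  periodic_of f L x -> odd e.
Proof.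
move=> L1 pr; rewrite perE (iter_char _ _ _ pr) => /and3P [_ /andP [Lev dvL] _].
have L20 : (0 < L./2)%N.
  have := odd_double_half L; rewrite (negbTE Lev) add0n; lia.
have := Mq_odd _ L20; case/dvdnP: dvL => k ->; rewrite oddM; by case/andP.
Qed.

Hypothesis HF : #|F| = (q * q)%N.

Definition K0 := [set x : F | x ^+ q == x].
Definition U0 := [set x : F | x ^+ q == - x].

Lemma card_roots_le (a : F) : (#|[set x : F | x ^+ q == (a * x)%R]| <= q)%N.
Proof.
set S := [set x : F | x ^+ q == a * x].
pose p : {poly F} := 'X^q - (a *: 'X).
have sp : size p = q.+1.
  rewrite /p size_polyDl size_polyXn // size_polyN.
  apply: leq_ltn_trans (size_scale_leq _ _) _; rewrite size_polyX; lia.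
have p0 : p != 0 by rewrite -size_poly_eq0 sp.
have := @max_poly_roots _ p (enum S) p0.
rewrite sp -cardE ltnS; apply => //; last exact: enum_uniq.
apply/allP => x; rewrite mem_enum inE => /eqP E.
by rewrite rootE /p !hornerE E subrr.
Qed.

Lemma card_UK : (#|U0| * #|K0| = q * q)%N.
Proof.
pose g x := (u x, v x).
have ginj : injective g.
  move=> x y [E1 E2]; apply: (mulfI H2).
  have h : forall t : F, 2 * t = v t - u t by move=> t; rewrite /u /v; ring.
  by rewrite !h E1 E2.
have E : g @: [set: F] = setX U0 K0.
  apply/setP => -[a b]; rewrite !inE; apply/imsetP/andP => [[x _ [-> ->]] | [/eqP ha /eqP hb]].
    by rewrite uq vq.
  exists ((b - a) / 2) => //.
  have hx : ((b - a) / 2) ^+ q = (b + a) / 2.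
    by rewrite exprMn qB ha hb exprVn q2 /= opprK.
  rewrite /g /u /v hx; congr (_, _); field; exact: H2.
by rewrite -cardsX -E card_imset // cardsT HF.
Qed.

Lemma card_U0 : #|U0| = q.
Proof.
have h1 : (#|U0| <= q)%N.
  rewrite (_ : U0 = [set x : F | x ^+ q == -1 * x]) ?card_roots_le //.
  by apply/setP => x; rewrite !inE mulN1r.
have h2 : (#|K0| <= q)%N.
  rewrite (_ : K0 = [set x : F | x ^+ q == 1 * x]) ?card_roots_le //.
  by apply/setP => x; rewrite !inE mul1r.
have := card_UK; nia.
Qed.

Lemma card_fiber (w : F) : w ^+ q = w -> w != 0 -> #|[set x | z x == w]| = q.-1.
Proof.
move=> wq w0; set S := [set x | z x == w].
have c3 : c ^+ 3 != 0 by rewrite expf_neq0.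
have ux0 : forall x, x \in S -> u x != 0.
  move=> x; rewrite inE => /eqP zx; apply/eqP => ux; move: w0.
  by rewrite -zx /z ux expr0n mulr0 eqxx.
have uS : {in S &, injective u}.
  move=> x y xS yS E.
  have := ux0 _ xS; have := ux0 _ yS.
  move: xS yS; rewrite !inE => /eqP zx /eqP zy ux0y ux0x.
  have vE : v x = v y.
    have k : c ^+ 3 * u y ^+ 2 * (v y - v x) = 0.
      have : z x - z y = 0 by rewrite zx zy subrr.
      rewrite /z E => h0; rewrite -[RHS]h0; ring.
    move/eqP: k; rewrite !mulf_eq0 (negbTE Hc0) (negbTE ux0y) /= subr_eq0.
    by move/eqP ->.
  apply: (mulfI H2).
  have h : forall t : F, 2 * t = v t - u t by move=> t; rewrite /u /v; ring.
  by rewrite !h E vE.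
have imS : u @: S = U0 :\ 0.
  apply/setP => y; rewrite !inE; apply/imsetP/andP => [[x xS ->] | [y0 /eqP yq]].
    by rewrite ux0 // uq.
  pose V := - w / (c ^+ 3 * y ^+ 2).
  have Vq : V ^+ q = V.
    rewrite /V exprMn exprVn exprMn qN wq exprAC Hc exprAC yq.
    by rewrite sqrrN.
  have xq : ((V - y) / 2) ^+ q = (V + y) / 2.
    by rewrite exprMn qB Vq yq exprVn q2 opprK.
  exists ((V - y) / 2); last by rewrite /u xq; field.
  rewrite inE /z /u /v xq /V; apply/eqP; field.
  by rewrite H2 y0 Hc0.
rewrite -(card_in_imset uS) imS.
have := cardsD1 0 U0; rewrite card_U0 inE expr0n oppr0 (_ : (q == 0%N) = false) ?eqxx; last by case: (q) Hq1.
rewrite add1n => ->.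
by [].
Qed.


Lemma card_Pd d : (d %| q.-1)%N ->
  #|[set x : F | d.-primitive_root (z x)]| = (totient d * q.-1)%N.
Proof.
move=> dq.
have dF : (d %| #|F|.-1)%N.
  apply: dvdn_trans dq _; rewrite HF; apply/dvdnP; exists q.+1.
  case: (q) Hq1 => // m _; rewrite /=; lia.
rewrite -sum1_card (partition_big z (fun w => d.-primitive_root w)) //=.
rewrite -(card_prim F d dF) -sum1_card big_distrl /= mul1n.
apply: eq_big => [w|w pw]; first by rewrite inE.
rewrite -(card_fiber w); first last.
- by rewrite (prim_root_eq0 pw) -lt0n (prim_order_gt0 pw).
- have h1 : w ^+ q.-1 = 1 by apply/eqP; rewrite -(prim_order_dvd pw).
  by rewrite -(@prednK q) ?exprS ?h1 ?mulr1 //; lia.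
rewrite -sum1_card; apply: eq_bigl => x; rewrite inE.
rewrite inE; case: eqP => [->|]; by rewrite ?pw ?andbT ?andbF.
by move=> x; rewrite inE.
Qed.


Lemma dvdn_oddP m n : (m %| n)%N -> odd n -> odd m.
Proof. by case/dvdnP => k ->; rewrite oddM => /andP[]. Qed.

Lemma prim_uniq d1 d2 (w : F) : d1.-primitive_root w -> d2.-primitive_root w -> d1 = d2.
Proof.
move=> p1 p2; apply/eqP; rewrite eqn_dvd (prim_order_dvd p1) (prim_order_dvd p2).
by rewrite (prim_expr_order p1) (prim_expr_order p2) eqxx.
Qed.

Lemma card_bool (P : pred F) : #|[set x | P x]| = (\sum_x (P x : nat))%N.
Proof.
rewrite -sum1_card big_mkcond /=; apply: eq_bigr => x _; rewrite inE; by case: (P x).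
Qed.

Lemma main_count (r s L : nat) : q.-1 = (2 ^ s * r)%N -> odd r -> (1 < L)%N ->
  #|cycles_of_length f L| =
    (\sum_(d < r.+1 | (d %| r) && (2 * ordn (3 * d) 4 == L))
        (totient d * q.-1 %/ (2 * ordn (3 * d) 4)))%N.
Proof.
move=> hq rodd L1.
have q10 : (0 < q.-1)%N by lia.
have r0 : (0 < r)%N by move: q10; rewrite hq muln_gt0 => /andP[].
have rq : (r %| q.-1)%N by rewrite hq dvdn_mull.
pose Pd (d : nat) := [set x : F | d.-primitive_root (z x)].
have L0 : (0 < L)%N by lia.
have stepA : (#|cycles_of_length f L| * L)%N = #|[set x : F | periodic_of f L x]|.
  have := @count_per F f L [set: F] (fun x _ => in_setT (f x)).
  have -> : [set x in [set: F] | periodic_of f L x] = [set x | periodic_of f L x].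
    by apply/setP => x; rewrite !inE.
  have E : cycles_of_length f L = cyc _ f L @: [set x | periodic_of f L x].
    apply/setP => C; apply/imsetP/imsetP => [][x hx ->]; exists x => //; move: hx; by rewrite !inE.
  by rewrite E => ->.
have stepB : #|[set x : F | periodic_of f L x]| =
    (\sum_(d < r.+1 | (d %| r) && (2 * ordn (3 * d) 4 == L)) #|Pd d|)%N.
  rewrite card_bool.
  rewrite (eq_bigr (fun d : 'I_r.+1 => \sum_x (d.-primitive_root (z x) : nat))%N); last first.
    by move=> d _; rewrite /Pd card_bool.
  rewrite exchange_big /=; apply: eq_bigr => x _.
  case: (eqVneq (z x) 0) => zx.
    rewrite (negbTE (per_zero _ _ L1 zx)) big1 // => d /andP [dr _]; rewrite zx.
    case pr: (d.-primitive_root 0) => //=.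
    have := prim_root_eq0 pr; rewrite eqxx => /esym/eqP d0.
    by rewrite d0 dvd0n in dr; rewrite (eqP dr) in r0.
  have zq1 : z x ^+ q.-1 = 1.
    apply: (mulfI zx); rewrite mulr1 -exprS prednK ?zq //; lia.
  have [e pe eq1] := prim_order_exists q10 zq1.
  case: (boolP (periodic_of f L x)) => px /=.
    have eodd := per_odd _ _ _ L1 pe px.
    have er : (e %| r)%N by move: eq1; rewrite hq Gauss_dvdr // coprimeXr // coprimen2.
    have eL := per_prim _ _ _ L1 pe eodd; rewrite px in eL.
    have el : (e < r.+1)%N by rewrite ltnS dvdn_leq.
    rewrite (bigD1 (Ordinal el)) /=; last by rewrite er -(eqP (esym eL)) eqxx.
    rewrite pe big1 //= => d /andP [_ dne].
    case pr: (d.-primitive_root (z x)) => //; exfalso.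
    have de := prim_uniq _ _ _ pr pe.
    by move: dne; rewrite (_ : d = Ordinal el) ?eqxx //; apply: val_inj.
  rewrite big1 // => d /andP [dr /eqP dL]; case pr: (d.-primitive_root (z x)) => //=.
  have dodd := dvdn_oddP _ _ dr rodd.
  have := per_prim _ _ _ L1 pr dodd; rewrite (negbTE px) dL eqxx //.
have stepC : forall d : 'I_r.+1, ((d %| r) && (2 * ordn (3 * d) 4 == L))%N ->
    exists b, #|Pd d| = (b * L)%N /\ (totient d * q.-1)%N = (b * L)%N.
  move=> d /andP [dr /eqP dL].
  have dodd : odd d := dvdn_oddP _ _ dr rodd.
  exists #|cyc _ f L @: [set x in Pd d | periodic_of f L x]|.
  have Acl : forall x, x \in Pd d -> f x \in Pd d.
    by move=> x; rewrite !inE zf => pr; rewrite prim_root_exp_coprime // coprime2n.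
  have := @count_per F f L (Pd d) Acl.
  have -> : [set x in Pd d | periodic_of f L x] = Pd d.
    apply/setP => x; rewrite !inE; apply/andP/idP => [[]//|pr]; split => //.
    by rewrite (per_prim _ _ _ L1 pr dodd) dL.
  move=> h; split => //; by rewrite -h card_Pd // (dvdn_trans dr rq).
apply/eqP; rewrite -(eqn_pmul2r L0) stepA stepB big_distrl /=; apply/eqP.
apply: eq_bigr => d Dd; have [b [h1 h2]] := stepC d Dd.
move/andP: Dd => [_ /eqP ->]; by rewrite h2 mulnK.
Qed.

End Fld.


Theorem theorem9 (F : finFieldType) (p k q s r : nat) (c : F) :
  prime p -> odd p -> (0 < k)%N -> q = (p ^ k)%N -> #|F| = (q ^ 2)%N ->
  q.-1 = (2 ^ s * r)%N -> odd r ->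
  c != 0 -> c ^+ q = c ->
  forall L : nat, (1 < L)%N ->
    #|cycles_of_length (fun x : F => c * (x ^+ q.+1 - x ^+ 2)) L| =
    (\sum_(d < r.+1 | (d %| r)%N && ((2 * ordn (3 * d) 4)%N == L))
        (totient d * q.-1 %/ (2 * ordn (3 * d) 4)))%N.
Proof.
move=> pp podd k0 Hq HF2 hq rodd Hc0 Hc L L1.
have HF : #|F| = (q * q)%N by rewrite HF2 expnS expn1.
have Hq1 : (1 < q)%N.
  have := @leq_pexp2l p 1 k (prime_gt0 pp) k0; rewrite expn1 -Hq.
  by apply: leq_trans; apply: prime_gt1.
have pch : p \in [pchar F].
  apply: (@card_finPcharP F p (k * 2)) => //; by rewrite HF2 Hq expnM.
have qnat : [pchar F].-nat q by rewrite Hq pnatX (pnatE _ pp) pch.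
have HqD : forall x y : F, (x + y) ^+ q = x ^+ q + y ^+ q.
  by move=> x y; apply: GRing.exprDn_pchar.
have Hqq : forall x : F, x ^+ q ^+ q = x.
  by move=> x; rewrite -exprM -HF expf_card.
have H2 : (2 : F) != 0.
  rewrite -(GRing.dvdn_pcharf pch 2); apply/negP => hd.
  have hp2 : (p <= 2)%N by apply: dvdn_leq.
  have p2 : p = 2%N by have := prime_gt1 pp; lia.
  by rewrite p2 in podd.
by apply: main_count; try eassumption.
Qed.
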